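(* For $n\ge 2$, the quantity $|\mathcal{I}^{(n)}_{p_k}(P_n^* )|$, as $k$ ranges over $1\le k\le n$, is maximized at $k=2$ and at $k=n-1$.
   Context: $\mathcal{I}^{(r)}_v(G)$ denotes the family of independent $r$-sets (sets of $r$ pairwise non-adjacent vertices) of a graph $G$ containing the vertex $v$. For a graph $G$ with vertices $x_1,\dots,x_n$, the pendant graph $G^*$ has vertex set $\{x_1,\dots,x_n\}\sqcup\{p_1,\dots,p_n\}$ and edge set $E(G)\sqcup\{x_1p_1,\dots,x_np_n\}$. $P_n$ is the path with vertices $x_1,\dots,x_n$ and edges $x_jx_{j+1}$, and $P_n^*$ its pendant graph. *)

(* Defs.v *)
From mathcomp Require Import all_boot.
Set Implicit Arguments. Unset Strict Implicit. Unset Printing Implicit Defensive.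

(* A simple graph is a symmetric irreflexive relation e on a finite vertex type. *)

Definition indep_rsets_at (T : finType) (e : rel T) (r : nat) (v : T) : {set {set T}} :=
  [set A : {set T} | [&& #|A| == r, v \in A &
                         [forall x in A, forall y in A, ~~ e x y]]].

(* Pendant graph G^*: vertices inl x = x_i (original) and inr x = p_i (pendant),
   edges E(G) plus x_i p_i. *)
Definition pendant_rel (T : finType) (e : rel T) : rel (T + T) :=
  fun u v => match u, v with
             | inl x, inl y => e x y
             | inl x, inr y => x == y
             | inr x, inl y => x == y
             | inr _, inr _ => false
             end.

(* The path P_n on vertices 'I_n (x_{j+1} is the ordinal j), edges x_j x_{j+1}. *)
Definition path_rel (n : nat) : rel 'I_n :=
  fun i j => (i.+1 == j :> nat) || (j.+1 == i :> nat).

(* The pendant vertex p_k (1-based k) is inr (k-1). *)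
Definition pendant_count (n : nat) (k : 'I_n) : nat :=
  #|indep_rsets_at (pendant_rel (@path_rel n)) n (inr k)|.

(* Main.v *)
Require Import Defs.
From mathcomp Require Import all_boot.
From mathcomp Require Import zify.
Set Implicit Arguments. Unset Strict Implicit. Unset Printing Implicit Defensive.

Fixpoint bseqs (n : nat) : seq (seq bool) :=
  if n is m.+1 then map (cons true) (bseqs m) ++ map (cons false) (bseqs m) else [:: [::]].

Fixpoint nofib (s : seq bool) : bool :=
  if s is b :: s' then ~~ (b && head false s') && nofib s' else true.

Lemma nofibE s : nofib s <-> (forall i, ~~ (nth false s i && nth false s i.+1)).
Proof.
elim: s => [|b s IH] /=; first by split => // _ [|i].
split.
  move=> /andP [H1 /IH H2] [|i] /=; last exact: H2.
  by rewrite nth0.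
move=> H; apply/andP; split; first by have := H 0; rewrite /= nth0.
by apply/IH => i; exact: (H i.+1).
Qed.

Lemma count_bseqsS n (P : pred (seq bool)) :
  count P (bseqs n.+1) = count (fun s => P (true :: s)) (bseqs n)
                         + count (fun s => P (false :: s)) (bseqs n).
Proof. by rewrite /= count_cat !count_map. Qed.

Definition G n := count nofib (bseqs n).
Definition Q n k := count (fun s => nofib s && ~~ nth false s k) (bseqs n).

Lemma G0 : G 0 = 1. Proof. by []. Qed.
Lemma G1 : G 1 = 2. Proof. by []. Qed.
Lemma GSS n : G n.+2 = G n.+1 + G n.
Proof.
rewrite /G count_bseqsS [in RHS]addnC; congr addn.
rewrite count_bseqsS /= (eq_count (a2 := pred0)) ?count_pred0 //=.
Qed.

Lemma count0 (P : pred (seq bool)) l : (forall s, P s = false) -> count P l = 0.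
Proof. by move=> H; elim: l => //= x l ->; rewrite H. Qed.

Lemma Q0 n : Q n.+1 0 = G n.
Proof.
rewrite /Q count_bseqsS count0 ?add0n; last by move=> s; rewrite /= ?andbF ?andbT.
by apply: eq_count => s /=; rewrite andbT.
Qed.

Lemma Q1 n : Q n.+2 1 = G n + G n.
Proof.
rewrite /Q count_bseqsS /= !count_cat !count_map /=.
rewrite count0 ?add0n; last by move=> s; rewrite /= ?andbF ?andbT.
rewrite [X in _ + (X + _)]count0 ?add0n; last by move=> s; rewrite /= ?andbF ?andbT.
by congr addn; apply: eq_count => s /=; rewrite andbT.
Qed.

Lemma QSS n k : Q n.+2 k.+2 = Q n k + Q n.+1 k.+1.
Proof.
rewrite /Q count_bseqsS; congr addn.
rewrite count_bseqsS /= count0 ?add0n //.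
Qed.

Lemma QE k n : k < n -> Q n k = G k * G (n.-1 - k).
Proof.
elim: k {-2}k (leqnn k) n => [|K IH] k.
  rewrite leqn0 => /eqP -> [|n] //= _; by rewrite Q0 G0 mul1n subn0.
case: k => [|[|k]] hk [|[|n]] //= hn.
- by rewrite Q0 G0 mul1n subn0.
- by rewrite Q1 G1 mul2n -addnn subSS subn0.
rewrite QSS (IH k) ?(IH k.+1); try lia.
have -> : n.+1 - k.+2 = n.-1 - k by lia.
have -> : (n.+1).-1 - k.+1 = n.-1 - k by lia.
by rewrite GSS mulnDl addnC.
Qed.

Lemma Gle n : G n.+1 <= 2 * G n.
Proof.
case: n => // n; rewrite GSS mul2n -addnn leq_add2l.
by case: n => // n; rewrite GSS leq_addr.
Qed.

Lemma Gprod k j : G k * G j.+1 <= 2 * G (k + j).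
Proof.
elim: k {-2}k (leqnn k) j => [|K IH] k.
  by rewrite leqn0 => /eqP -> j; rewrite G0 mul1n Gle.
case: k => [|[|k]] hk j.
- by rewrite G0 mul1n Gle.
- by rewrite G1.
rewrite GSS mulnDl addSn addSn GSS mulnDr leq_add //.
  by rewrite -addSn IH.
by rewrite IH // ltnW.
Qed.
Lemma bseqs_uniq n : uniq (bseqs n).
Proof.
elim: n => //= n IH; rewrite cat_uniq !map_inj_uniq // ?IH /=; try by move=> x y [].
rewrite andbT; apply/hasPn => s /mapP [u _ ->]; apply/mapP => [[v _]] //.
Qed.

Lemma mem_bseqs n s : (s \in bseqs n) = (size s == n).
Proof.
elim: n s => [|n IH] [|b s] //=; rewrite mem_cat.
- by apply/negP => /orP [] /mapP [v _].
rewrite eqSS -IH; case: b.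
  rewrite mem_map; last by move=> x y [].
  by case: (s \in _) => //=; apply/negP => /mapP [v _].
rewrite (mem_map (f := cons false)); last by move=> x y [].
by case: (s \in _); rewrite ?orbT //= orbF; apply/negP => /mapP [v _].
Qed.

Lemma card_tuple_pred n (P : pred (seq bool)) :
  #|[set t : n.-tuple bool | P t]| = count P (bseqs n).
Proof.
rewrite cardsE cardE /enum_mem size_filter.
have -> : count (mem [pred t : n.-tuple bool | P t]) (Finite.enum (n.-tuple bool))
  = count P (map val (Finite.enum (n.-tuple bool))) by rewrite count_map.
apply/permP; apply: uniq_perm.
- rewrite map_inj_uniq; [rewrite -enumT; exact: enum_uniq | exact: val_inj].
- exact: bseqs_uniq.
move=> s; rewrite mem_bseqs; apply/mapP/idP => [[t _ ->]|/eqP H].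
  by rewrite size_tuple.
have H' : size s == n by rewrite H.
by exists (Tuple H'); rewrite // -enumT mem_enum.
Qed.

Section Bij.
Variable n : nat.
Local Notation T := ('I_n + 'I_n)%type.

Definition psi (t : n.-tuple bool) : {set T} :=
  [set (if tnth t i then inl i else inr i) | i : 'I_n].

Lemma psi_inl t j : (inl j \in psi t) = tnth t j.
Proof.
apply/imsetP/idP => [[i _]|H]; last by exists j => //; rewrite H.
by case: ifP => // Hi [->].
Qed.

Lemma psi_inr t j : (inr j \in psi t) = ~~ tnth t j.
Proof.
apply/imsetP/idP => [[i _]|H]; last by exists j => //; rewrite (negbTE H).
by case: ifP => // Hi [->]; rewrite Hi.
Qed.

Lemma card_psi t : #|psi t| = n.
Proof.
rewrite card_imset ?card_ord // => i j.
by case: ifP; case: ifP => // _ _ [].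
Qed.

Lemma psi_inj : injective psi.
Proof.
move=> t1 t2 H; apply: eq_from_tnth => i.
by rewrite -psi_inl H psi_inl.
Qed.

Lemma psi_indep (t : n.-tuple bool) : nofib t -> forall x y, x \in psi t -> y \in psi t ->
  ~~ pendant_rel (@path_rel n) x y.
Proof.
move/nofibE => H [i|i] [j|j]; rewrite ?psi_inl ?psi_inr /= => Hi Hj //.
- rewrite /path_rel; apply/negP => /orP [] /eqP E.
    by have := H i; rewrite -!(tnth_nth false) E -(tnth_nth false t j) Hi Hj.
  by have := H j; rewrite -(tnth_nth false t j) E -(tnth_nth false t i) Hi Hj.
- by apply/eqP => E; move: Hj; rewrite -E Hi.
- by apply/eqP => E; move: Hi; rewrite E Hj.
Qed.

Lemma set_eq (k : 'I_n) :
  indep_rsets_at (pendant_rel (@path_rel n)) n (inr k) =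
  psi @: [set t : n.-tuple bool | nofib t && ~~ nth false t k].
Proof.
apply/setP => A; rewrite inE; apply/idP/imsetP.
  move=> /and3P [/eqP cA kA ind].
  have indP : forall x y, x \in A -> y \in A -> ~~ pendant_rel (@path_rel n) x y.
    by move=> x y xA yA; move/forall_inP: ind => /(_ x xA) /forall_inP /(_ y yA).
  pose t := [tuple inl i \in A | i < n].
  have tE : forall i, tnth t i = (inl i \in A) by move=> i; rewrite tnth_mktuple.
  exists t.
    rewrite inE; apply/andP; split.
      apply/nofibE => i; apply/negP => /andP [h1 h2].
      have hi1 : i.+1 < n.
        rewrite ltnNge; apply/negP => hle; move: h2.
        by rewrite nth_default // size_tuple.
      have hi : i < n by apply: ltnW.
      have := tnth_nth false t (Ordinal hi); rewrite tE /= h1 => I1.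
      have := tnth_nth false t (Ordinal hi1); rewrite tE /= h2 => I2.
      by have := indP _ _ I1 I2; rewrite /= /path_rel /= eqxx.
    rewrite -tnth_nth tE; apply/negP => kinl.
    by have := indP _ _ kinl kA; rewrite /= eqxx.
  apply/eqP; rewrite eqEcard card_psi cA leqnn andbT.
  apply/subsetP => [[i|i]] xA; rewrite ?psi_inl ?psi_inr tE //.
  by apply/negP => iA; have := indP _ _ iA xA; rewrite /= eqxx.
move=> [t]; rewrite inE => /andP [g nk] ->.
rewrite card_psi eqxx psi_inr.
have -> : tnth t k = nth false t k by rewrite (tnth_nth false).
rewrite nk /=.
apply/forall_inP => x xA; apply/forall_inP => y yA; exact: (psi_indep g).
Qed.

End Bij.

Lemma pendant_countE n (k : 'I_n) : pendant_count k = G k * G (n.-1 - k).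
Proof.
rewrite /pendant_count set_eq card_imset; last exact: psi_inj.
rewrite (card_tuple_pred _ (fun s => nofib s && ~~ nth false s k)); exact: QE.
Qed.

Theorem corollary1 (n : nat) (hn : 2 <= n) (a b : 'I_n)
    (ha : nat_of_ord a = 1) (hb : nat_of_ord b = n - 2) :
  forall k : 'I_n, pendant_count k <= pendant_count a /\ pendant_count k <= pendant_count b.
Proof.
move=> k; rewrite !pendant_countE ha hb.
have -> : n.-1 - (n - 2) = 1 by lia.
have -> : n.-1 - 1 = n - 2 by lia.
rewrite G1 (mulnC (G (n - 2))).
suff H : G k * G (n.-1 - k) <= 2 * G (n - 2) by [].
have hk := ltn_ord k.
case: (ltnP k (n.-1)) => hk2.
  have -> : n.-1 - k = (n - 2 - k).+1 by lia.
  have := Gprod k (n - 2 - k).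
  by have -> : k + (n - 2 - k) = n - 2 by lia.
have -> : n.-1 - k = 0 by lia.
have -> : nat_of_ord k = (n - 2).+1 by lia.
by rewrite G0 muln1 Gle.
Qed.
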